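(* Let $q$ be a prime power and let $\mathcal{P}$ be a monic irreducible polynomial in $\mathbb{F}_q[T]$ of degree $m$. Then for every $n\in\mathbb{Z}_{\geqslant1}$, $\mathcal{P}$ is a c-Wieferich prime in $\mathbb{F}_q[T]$ if and only if $\mathcal{P}$ is a c-Wieferich prime in $\mathbb{F}_{q^{mn+1}}[T]$.
   Context: For a prime power $Q$, the Carlitz module over $\mathbb{F}_Q[T]$: for $N\in\mathbb{F}_Q[T]$, $\rho_N(X)$ is the additive polynomial determined by requiring $N\mapsto\rho_N$ to be an $\mathbb{F}_Q$-algebra homomorphism into additive polynomials (multiplication = composition) with $\rho_T(X)=X^Q+TX$. A monic irreducible $\mathcal{P}\in\mathbb{F}_Q[T]$ is a c-Wieferich prime in $\mathbb{F}_Q[T]$ if $\rho_{\mathcal{P}-1}(1)\equiv0\pmod{\mathcal{P}^2}$; it is known that this is equivalent to $F_{Q,\deg\mathcal{P}-1}\equiv0\pmod{\mathcal{P}}$, where $F_{Q,0}=1$ and $F_{Q,i}=(-1)^i+(T^{Q^i}-T)F_{Q,i-1}$. (Since $\gcd(m,mn+1)=1$, $\mathcal{P}$ remains irreducible over $\mathbb{F}_{q^{mn+1}}$.) *)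

(* Defs.v *)
From HB Require Import structures.
From mathcomp Require Import all_boot all_order all_algebra all_field.
Set Implicit Arguments. Unset Strict Implicit. Unset Printing Implicit Defensive.
Import GRing.Theory.
Local Open Scope ring_scope.

(* Carlitz module over F_Q[T] = {poly K}, where Q = #|K|.
   rho_T(x) = x^Q + T x ; rho_N = sum_i N_i rho_T^i  (the unique F_Q-algebra
   homomorphism N |-> rho_N into additive polynomials, composition as product).
   We only need rho_N evaluated at elements x of K[T]. *)
Definition carlitzT (K : finFieldType) (x : {poly K}) : {poly K} :=
  x ^+ #|K| + 'X * x.

Definition carlitz (K : finFieldType) (N x : {poly K}) : {poly K} :=
  \sum_(i < size N) N`_i *: iter i (@carlitzT K) x.

Definition cWieferich (K : finFieldType) (P : {poly K}) : Prop :=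
  [/\ P \is monic, irreducible_poly P & P ^+ 2 %| carlitz (P - 1) 1].

(* Main.v *)
Require Import Defs.
From HB Require Import structures.
From mathcomp Require Import all_boot all_order all_algebra all_field.
From mathcomp Require Import ring.
From Stdlib Require Import Classical.
Set Implicit Arguments. Unset Strict Implicit. Unset Printing Implicit Defensive.
Import GRing.Theory.
Local Open Scope ring_scope.

Definition fx (K : fieldType) (g h : {poly K}) (N a : nat) :=
  g %| h ^+ (N ^ a) - h.

Lemma dvdp_subXX (K : fieldType) (g x y : {poly K}) k :
  g %| x - y -> g %| x ^+ k - y ^+ k.
Proof. by move=> H; rewrite subrXX dvdp_mulr. Qed.

Lemma fx_add (K : fieldType) (g h : {poly K}) N a b :
  fx g h N a -> fx g h N b -> fx g h N (a + b).
Proof.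
rewrite /fx expnD mulnC exprM => Ha Hb.
have -> : (h ^+ (N ^ b)) ^+ (N ^ a) - h =
   ((h ^+ (N ^ b)) ^+ (N ^ a) - h ^+ (N ^ a)) + (h ^+ (N ^ a) - h)
  by rewrite addrA subrK.
by rewrite dvdp_add // dvdp_subXX.
Qed.

Lemma fx_mul (K : fieldType) (g h : {poly K}) N a c :
  fx g h N a -> fx g h N (a * c).
Proof.
move=> Ha; elim: c => [|c IH].
  by rewrite muln0 /fx expn0 expr1 subrr dvdp0.
by rewrite mulnS fx_add.
Qed.

Lemma fx_cancel (K : fieldType) (g h : {poly K}) N e k :
  fx g h N (e + k) -> fx g h N k -> fx g h N e.
Proof.
rewrite /fx expnD mulnC exprM => Hek Hk.
have -> : h ^+ (N ^ e) - h =
   (h ^+ (N ^ e) - (h ^+ (N ^ k)) ^+ (N ^ e)) + ((h ^+ (N ^ k)) ^+ (N ^ e) - h)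
  by rewrite addrA subrK.
rewrite dvdp_add // dvdp_subXX // -opprB dvdpNr //.
Qed.

Lemma fx_gcd (K : fieldType) (g h : {poly K}) N a b :
  (0 < a)%N -> fx g h N a -> fx g h N b -> fx g h N (gcdn a b).
Proof.
move=> a0 Ha Hb; have [u _ H] := Bezoutl b a0.
case/dvdnP: H => c Hc.
apply: (@fx_cancel _ _ _ _ _ (u * b)); first by rewrite Hc mulnC fx_mul.
by rewrite mulnC fx_mul.
Qed.

Lemma card_ppow (F : finFieldType) :
  exists2 p, p \in [pchar F] & exists r, #|F| = (p ^ r)%N.
Proof.
have [p pr pc] := finPcharP F.
exists p => //; exists (logn p #|F|).
exact: (card_pprimeChar pc).
Qed.

Lemma frobD (F : finFieldType) (R : comNzRingType) e (a b : R) :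
  [pchar R] =i [pchar F] ->
  (a + b) ^+ (#|F| ^ e) = a ^+ (#|F| ^ e) + b ^+ (#|F| ^ e).
Proof.
move=> hc; have [p pc [r ->]] := card_ppow F.
apply: exprDn_pchar.
have pc' : p \in [pchar R] by rewrite hc.
rewrite (eq_pnat _ (pcharf_eq pc')) -expnM pnatX pnat_id ?(pcharf_prime pc) //.
Qed.

Lemma card_gt1 (F : finFieldType) : (1 < #|F|)%N.
Proof. exact: finNzRing_gt1. Qed.

Lemma factA (K : finFieldType) (g : {poly K}) (h : {poly K}) :
  g \is monic -> irreducible_poly g ->
  g %| h ^+ (#|K| ^ (size g).-1) - h.
Proof.
move=> gm gi.
have hI : monic_irreducible_poly g by split.
pose x : {poly %/ g with hI} := in_qpoly g h.
have := expf_card x; rewrite card_qfpoly.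
move/(congr1 (fun y : {poly %/ g with hI} => (y : {poly K}))).
rewrite /x -rmorphXn /= !(mk_monicE hI).
rewrite -!(Pdiv.IdomainMonic.modpE gm) => E.
by apply/modp_eq0P; rewrite modpD modpN E subrr.
Qed.

Lemma expf_cardX (F : finFieldType) (c : F) j : c ^+ (#|F| ^ j) = c.
Proof.
elim: j => [|j IH]; first by rewrite expn0 expr1.
by rewrite expnS exprM expf_card IH.
Qed.

Lemma fx_all (F : finFieldType) (P : {poly F}) j :
  fx P 'X #|F| j -> forall h, fx P h #|F| j.
Proof.
move=> HX; elim/poly_ind => [|h1 c IH].
  rewrite /fx expr0n expn_eq0 [(#|F| == 0)%N]eqn0Ngt (ltnW (card_gt1 F)) /=.
  by rewrite subrr dvdp0.
rewrite /fx frobD; last exact: pchar_poly.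
rewrite exprMn -rmorphXn /= expf_cardX.
set M := (#|F| ^ j)%N.
have -> : h1 ^+ M * 'X ^+ M + c%:P - (h1 * 'X + c%:P) =
   (h1 ^+ M - h1) * 'X ^+ M + h1 * ('X ^+ M - 'X) by ring.
by apply: dvdp_add; [apply: dvdp_mulr | apply: dvdp_mull].
Qed.

Lemma deg_le (F : finFieldType) (P : {poly F}) j :
  P \is monic -> irreducible_poly P -> fx P 'X #|F| j -> (0 < j)%N ->
  ((size P).-1 <= j)%N.
Proof.
move=> Pm Pi HX j0.
have Hall := fx_all HX.
have hI : monic_irreducible_poly P by split.
pose K := {poly %/ P with hI}.
have Hx : forall x : K, x ^+ (#|F| ^ j) = x.
  move=> x; apply: val_inj => /=.
  rewrite poly_of_qpolyX.
  have sx : (size (val x) < size P)%N.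
    apply: (leq_trans (size_mk_monic x)); by rewrite (mk_monicE hI).
  have H : Pdiv.CommonRing.rmodp ((val x) ^+ (#|F| ^ j)) P = val x.
    rewrite -(Pdiv.IdomainMonic.modpE Pm).
    have := Hall (val x); rewrite /fx => /modp_eq0P.
    rewrite modpD modpN => /eqP; rewrite subr_eq0 => /eqP ->.
    by rewrite modp_small.
  apply: etrans H; congr (Pdiv.CommonRing.rmodp _ _); exact: mk_monicE hI.
pose R : {poly K} := 'X^(#|F| ^ j) - 'X.
have N1 : (1 < #|F| ^ j)%N.
  apply: (leq_trans (card_gt1 F)).
  by rewrite -{1}(expn1 #|F|) leq_exp2l // card_gt1.
have sR : size R = (#|F| ^ j).+1.
  by rewrite /R size_polyDl size_polyXn // size_polyN size_polyX ltnS.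
have R0 : R != 0 by rewrite -size_poly_eq0 sR.
have := @max_ring_poly_roots _ R (enum K) R0.
rewrite uniq_rootsE enum_uniq sR -cardE card_qfpoly ltnS.
rewrite leq_exp2l ?card_gt1 //; apply => //.
by apply/allP => x _; rewrite /root /R !hornerE Hx subrr.
Qed.

Lemma irr_factor0 (K : fieldType) n (q : {poly K}) :
  (size q <= n)%N -> (1 < size q)%N ->
  exists2 g : {poly K}, g %| q & irreducible_poly g.
Proof.
elim: n q => [|n IH] q sq sq1; first by move: (leq_trans sq1 sq).
case: (classic (irreducible_poly q)) => [qi|nqi]; first by exists q.
have [e [se [eq neq]]] : exists e : {poly K}, [/\ size e != 1%N, e %| q & ~ (e %= q)].
  apply: NNPP => H; apply: nqi; split => // e se eq.
  apply: NNPP => neq; apply: H; by exists e.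
have q0 : q != 0 by rewrite -size_poly_gt0 (ltnW sq1).
have e0 : e != 0.
  apply/eqP => e0; move: eq; rewrite e0 dvd0p => /eqP q0'.
  by rewrite q0' eqxx in q0.
have le := dvdp_leq q0 eq.
have lt : (size e < size q)%N.
  rewrite ltn_neqAle le andbT; apply/negP => /eqP H.
  by apply: neq; rewrite -dvdp_size_eqp // H.
have se1 : (1 < size e)%N.
  by move: se e0; rewrite -size_poly_eq0; case: (size e) => [|[|]].
have sen : (size e <= n)%N by rewrite -ltnS (leq_trans lt sq).
have [g gd gi] := IH e sen se1.
by exists g => //; apply: dvdp_trans gd eq.
Qed.

Lemma irr_factor (K : fieldType) (q : {poly K}) :
  (1 < size q)%N ->
  exists2 g : {poly K}, (g \is monic) && (g %| q) & irreducible_poly g.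
Proof.
move=> sq1; have [g gd gi] := irr_factor0 (leqnn _) sq1.
have g0 : g != 0 := irredp_neq0 gi.
have l0 : lead_coef g != 0 by rewrite lead_coef_eq0.
have li0 : (lead_coef g)^-1 != 0 by rewrite invr_eq0.
have E : (lead_coef g)^-1 *: g %= g by rewrite eqp_scale.
exists ((lead_coef g)^-1 *: g).
  apply/andP; split; last by rewrite (eqp_dvdl _ E).
  by apply/monicP; rewrite lead_coefZ mulVf.
case: gi => sg gi; split; first by rewrite size_scale.
move=> e se ed; rewrite (eqp_rtrans E).
apply: gi => //; by rewrite -(eqp_dvdr _ E).
Qed.

Lemma irr_ext (F L : finFieldType) (f : {rmorphism F -> L}) m n (P : {poly F}) :
  P \is monic -> irreducible_poly P -> size P = m.+1 ->
  #|L| = (#|F| ^ (m * n + 1))%N -> irreducible_poly (map_poly f P).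
Proof.
move=> Pm Pi sP cL.
have m0 : (0 < m)%N by case: Pi; rewrite sP.
split; first by rewrite size_map_poly; case: Pi.
move=> q sq qd.
have Pf0 : map_poly f P != 0 by rewrite map_poly_eq0 irredp_neq0.
have q0 : q != 0.
  apply/eqP => e0; move: qd; rewrite e0 dvd0p => /eqP q0'.
  by rewrite q0' eqxx in Pf0.
have sq2 : (1 < size q)%N.
  by move: sq q0; rewrite -size_poly_eq0; case: (size q) => [|[|]].
have [g /andP[gm gq] gi] := irr_factor sq2.
set d := (size g).-1.
have d0 : (0 < d)%N by case: gi; rewrite /d; case: (size g) => [|[|]].
set N := #|F|.
have gP : g %| map_poly f P := dvdp_trans gq qd.
have h1 : fx g 'X N (d * (m * n + 1)).
  have := factA 'X gm gi; by rewrite cL -expnM mulnC.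
have h2 : fx g 'X N m.
  have := factA 'X Pm Pi; rewrite sP /= -(dvdp_map f) rmorphB rmorphXn /= map_polyX.
  by move/(dvdp_trans gP).
have h3 := fx_gcd m0 h2 h1.
have cop : coprime m (m * n + 1) by rewrite /coprime mulnC gcdnMDl gcdn1.
rewrite Gauss_gcdl // in h3.
set j := gcdn m d in h3.
have h4 : P %| 'X ^+ (N ^ j) - 'X.
  have G : (1 < size (gcdp P ('X ^+ (N ^ j) - 'X)))%N.
    rewrite -(size_map_poly f) gcdp_map rmorphB rmorphXn /= map_polyX.
    have gG : g %| gcdp (map_poly f P) ('X ^+ (N ^ j) - 'X) by rewrite dvdp_gcd gP; exact: h3.
    have G0 : gcdp (map_poly f P) ('X ^+ (N ^ j) - 'X) != 0.
      by rewrite gcdp_eq0 negb_and Pf0.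
    apply: leq_trans (dvdp_leq G0 gG).
    by case: gi.
  have Gs : size (gcdp P ('X ^+ (N ^ j) - 'X)) != 1%N by rewrite neq_ltn G orbT.
  have := apply_irredp Pi Gs (dvdp_gcdl P _).
  by move=> E; rewrite -(eqp_dvdl _ E) dvdp_gcdr.
have j0 : (0 < j)%N by rewrite gcdn_gt0 m0.
have := deg_le Pm Pi h4 j0; rewrite sP /= => mj.
have jd : (j <= d)%N by apply: dvdn_leq => //; exact: dvdn_gcdr.
have sg : size g = d.+1 by rewrite /d prednK //; case: gi => + _; apply: ltnW.
have le1 := dvdp_leq q0 gq.
have le2 := dvdp_leq Pf0 qd.
rewrite -dvdp_size_eqp //; apply/eqP; apply: anti_leq; rewrite le2 /=.
rewrite size_map_poly sP; apply: leq_trans le1; rewrite sg ltnS.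
exact: leq_trans mj jd.
Qed.

Definition phi (F : fieldType) (E : nat) (x : {poly F}) := x ^+ E + 'X * x.

Lemma cong_pow (F : finFieldType) (P : {poly F}) m n x :
  P \is monic -> irreducible_poly P -> size P = m.+1 ->
  P ^+ 2 %| x ^+ (#|F| ^ (m * n + 1)) - x ^+ #|F|.
Proof.
move=> Pm Pi sP.
have A : fx P x #|F| (m * n) by apply: fx_mul; have := factA x Pm Pi; rewrite sP.
case/dvdpP: A => b Hb.
rewrite addn1 expnSr exprM.
have -> : x ^+ (#|F| ^ (m * n)) = x + b * P by rewrite -Hb addrC subrK.
have := frobD 1 x (b * P) (@pchar_poly F); rewrite expn1 => ->.
rewrite addrAC subrr add0r exprMn dvdp_mull // dvdp_exp2l //.
exact: card_gt1.
Qed.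

Lemma iter_cong (F : finFieldType) (P : {poly F}) m n i :
  P \is monic -> irreducible_poly P -> size P = m.+1 ->
  P ^+ 2 %| iter i (phi (#|F| ^ (m * n + 1))) 1 - iter i (phi #|F|) 1.
Proof.
move=> Pm Pi sP; elim: i => [|i IH]; first by rewrite /= subrr dvdp0.
rewrite /= /phi.
set a := iter i _ 1; set b := iter i _ 1.
have -> : a ^+ (#|F| ^ (m * n + 1)) + 'X * a - (b ^+ #|F| + 'X * b) =
  (a ^+ (#|F| ^ (m * n + 1)) - a ^+ #|F|) + (a ^+ #|F| - b ^+ #|F|) + 'X * (a - b)
  by ring.
rewrite dvdp_add ?dvdp_mull //.
by rewrite dvdp_add ?(cong_pow _ _ Pm Pi sP) ?dvdp_subXX.
Qed.

Lemma iter_map (F L : finFieldType) (f : {rmorphism F -> L}) i :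
  iter i (@carlitzT L) 1 = map_poly f (iter i (phi #|L|) 1).
Proof.
elim: i => [|i IH]; first by rewrite /= rmorph1.
by rewrite /= IH /carlitzT /phi rmorphD rmorphM rmorphXn /= map_polyX.
Qed.

Lemma dvdp_bigsum (K : fieldType) (d : {poly K}) k (G : 'I_k -> {poly K}) :
  (forall i, d %| G i) -> d %| \sum_(i < k) G i.
Proof.
move=> H; elim/big_rec: _ => [|i x _ Hx]; first exact: dvdp0.
by rewrite dvdp_add.
Qed.

Theorem theorem5p1 (F L : finFieldType) (f : {rmorphism F -> L})
    (m n : nat) (P : {poly F}) :
  P \is monic -> irreducible_poly P -> size P = m.+1 ->
  (0 < n)%N -> #|L| = (#|F| ^ (m * n + 1))%N ->
  cWieferich P <-> cWieferich (map_poly f P).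
Proof.
move=> Pm Pi sP n0 cL.
pose B := \sum_(i < size (P - 1)) (P - 1)`_i *: iter i (phi #|L|) 1.
have EB : carlitz (map_poly f P - 1) 1 = map_poly f B.
  have -> : map_poly f P - 1 = map_poly f (P - 1) by rewrite rmorphB rmorph1.
  rewrite /carlitz size_map_poly /B rmorph_sum; apply: eq_bigr => i _.
  by rewrite coef_map (iter_map f) /= map_polyZ.
have D : P ^+ 2 %| B - carlitz (P - 1) 1.
  rewrite /B /carlitz -sumrB; apply: dvdp_bigsum => k.
  rewrite -scalerBr -mul_polyC; apply: dvdp_mull.
  rewrite cL; exact: iter_cong.
have iff : (P ^+ 2 %| carlitz (P - 1) 1) = (map_poly f P ^+ 2 %| carlitz (map_poly f P - 1) 1).
  rewrite EB -rmorphXn dvdp_map.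
  have -> : B = (B - carlitz (P - 1) 1) + carlitz (P - 1) 1 by rewrite subrK.
  by rewrite dvdp_addr.
rewrite /cWieferich -iff map_monic; split; case => _ _ H; split => //.
exact: (irr_ext f Pm Pi sP cL).
Qed.
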